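(* Let $\boldsymbol X \in \mathbb{R}^{n\times d}$, $\boldsymbol y \in \mathbb{R}^n$, $\boldsymbol M = \boldsymbol X^\top \boldsymbol X$, $\boldsymbol r = \boldsymbol X^\top \boldsymbol y$. Assume (A1) $\boldsymbol r > \mathbf 0$ and (A2) $M_{ij}\le 0$ for all $i\neq j$. Let $\boldsymbol C>\mathbf 0$, $\boldsymbol k>\mathbf 0$ in $\mathbb{R}^d$, and for $\varepsilon>0$ let $\boldsymbol\theta^{(\varepsilon)}(t)$ solve $$\frac{\mathrm d \theta_i}{\mathrm d t} = \theta_i\Big(r_i - \sum_{j=1}^d M_{ij}\theta_j\Big),\quad i=1,\dots,d,$$ with $\boldsymbol\theta^{(\varepsilon)}(0) = (C_1\varepsilon^{k_1},\dots,C_d\varepsilon^{k_d})$. Then there exists $B>0$ such that $\Vert\boldsymbol\theta^{(\varepsilon)}(t)\Vert\le B$ for all $\varepsilon\in(0,1]$ and all $t\ge 0$.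
   Context: Vector inequalities are coordinatewise; $\Vert\cdot\Vert$ is the Euclidean norm. *)

(* Defs.v *)
From HB Require Import structures.
From mathcomp Require Import all_boot all_order all_algebra.
From mathcomp Require Import all_classical all_reals all_analysis.
Set Implicit Arguments. Unset Strict Implicit. Unset Printing Implicit Defensive.
Import Order.TTheory GRing.Theory Num.Theory.
Import numFieldNormedType.Exports.
Local Open Scope classical_set_scope.
Local Open Scope ring_scope.

Definition eucl_norm (R : realType) (d : nat) (v : 'I_d -> R) : R :=
  Num.sqrt (\sum_(i < d) v i ^+ 2).

Definition lv_field (R : realType) (d : nat) (M : 'M[R]_d) (r : 'cV[R]_d)
  (th : 'I_d -> R) (i : 'I_d) : R :=
  th i * (r i 0 - \sum_(j < d) M i j * th j).

Definition lv_solution (R : realType) (d : nat) (M : 'M[R]_d) (r : 'cV[R]_d)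
  (x : R -> 'I_d -> R) (x0 : 'I_d -> R) : Prop :=
  forall i : 'I_d,
    x 0 i = x0 i /\
    ((fun s => x s i) @ 0^'+ --> x0 i) /\
    (forall t : R, 0 < t -> is_derive t (1 : R) (fun s => x s i) (lv_field M r (x t) i)).

(* Main.v *)
Require Import Defs.
From HB Require Import structures.
From mathcomp Require Import all_boot all_order all_algebra.
From mathcomp Require Import all_classical all_reals all_analysis.
From mathcomp Require Import ring lra.
Import Order.TTheory GRing.Theory Num.Theory.
Import numFieldNormedType.Exports.
Local Open Scope classical_set_scope.
Local Open Scope ring_scope.

Section Helpers.
Variable R : realType.

Lemma dM (f g : R -> R) (x df dg : R) : is_derive x (1:R) f df -> is_derive x (1:R) g dg ->
  is_derive x (1:R) (fun s => f s * g s) (f x * dg + g x * df).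
Proof. move=> Hf Hg. have := is_deriveM Hf Hg. done. Qed.
Arguments dM {f g x df dg}.

Lemma dsum m (h : 'I_m -> R -> R) (x : R) dh : (forall i, is_derive x (1:R) (h i) (dh i)) ->
  is_derive x (1:R) (fun s => \sum_(i < m) h i s) (\sum_(i < m) dh i).
Proof. move=> H; have := is_derive_sum H. by rewrite fct_sumE. Qed.

Lemma dcst (c x : R) : is_derive x (1:R) (fun _ => c) 0.
Proof. exact: is_derive_cst. Qed.

Lemma dB (f g : R -> R) (x df dg : R) : is_derive x (1:R) f df -> is_derive x (1:R) g dg ->
  is_derive x (1:R) (fun s => f s - g s) (df - dg).
Proof. move=> Hf Hg. have := is_deriveB Hf Hg. done. Qed.

Lemma dcmul (c : R) (f : R -> R) (x df : R) : is_derive x (1:R) f df ->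
  is_derive x (1:R) (fun s => c * f s) (c * df).
Proof.
move=> Hf; have := dM (dcst c x) Hf => H.
by rewrite -[X in is_derive _ _ _ X]addr0 -(mulr0 (f x)).
Qed.

Lemma dsq (f : R -> R) (x df : R) : is_derive x (1:R) f df ->
  is_derive x (1:R) (fun s => f s ^+ 2) (2 * f x * df).
Proof.
move=> Hf; have H := dM Hf Hf.
have -> : (fun s => f s ^+ 2) = (fun s => f s * f s) by apply/funext => s; rewrite expr2.
by rewrite -mulrA mulr2n mulrDl !mul1r.
Qed.

Lemma dexp (K x : R) : is_derive x (1:R) (fun s => expR (K * s)) (K * expR (K * x)).
Proof.
have H1 : is_derive x (1:R) (fun s => K * s) K.
  have := @dcmul K id x 1 (is_derive_id x (1:R)); by rewrite mulr1.
have := is_derive1_comp (is_derive_expR (K * x)) H1.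
by rewrite mulrC.
Qed.

Lemma sumcvg (T : Type) (F : set_system T) (FF : Filter F) m (f : 'I_m -> T -> R) a :
  (forall i, f i x @[x --> F] --> a i) -> (\sum_(i < m) f i x) @[x --> F] --> \sum_(i < m) a i.
Proof. move=> H. apply: cvg_big => //. exact: add_continuous. Qed.

Lemma near_ex (a : R) (Q : R -> Prop) : (\forall s \near a, Q s) ->
  exists2 e, 0 < e & forall s, `|s - a| < e -> Q s.
Proof. move=> /nbhs_normP [e /= e0 H]; exists e => // s hs; apply: H => /=. by rewrite distrC. Qed.

Lemma near_right_ex (a : R) (Q : R -> Prop) : (\forall s \near a^'+, Q s) ->
  exists2 e, 0 < e & forall s, a < s < a + e -> Q s.
Proof. move=> /nbhs_normP [e /= e0 H]; exists e => // s /andP[h1 h2]; apply: H => //=.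
 rewrite ltr0_norm ?subr_lt0 // opprB ltrBlDl //. Qed.

Lemma term_le_sum m (f : 'I_m -> R) i : (forall j, 0 <= f j) -> f i <= \sum_(j < m) f j.
Proof.
move=> H; rewrite (bigD1 i) //= lerDl; apply: sumr_ge0 => j _; exact: H.
Qed.

Lemma abs_le_sq (a : R) : `|a| <= 1 + a ^+ 2.
Proof.
have h : `|a| ^+ 2 = a ^+ 2 by rewrite real_normK ?num_real.
rewrite -h; have := normr_ge0 a; set z := `|a|; nra.
Qed.

Lemma sqrt_le (x : R) : 0 <= x -> Num.sqrt x <= 1 + x.
Proof.
move=> x0; rewrite -[X in _ <= X]ger0_norm ?addr_ge0 // -sqrtr_sqr ler_sqrt ?sqr_ge0 //.
nra.
Qed.

End Helpers.
Arguments dM {R} {f g x df dg}.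
Arguments dsum {R} {m h x dh}.
Arguments dB {R} {f g x df dg}.
Arguments dcmul {R} c {f x df}.
Arguments dcst {R}.
Arguments dsq {R f x df}.
Arguments dexp {R}.
Arguments sumcvg {R T F FF m f a}.
Arguments near_ex {R a Q}.
Arguments near_right_ex {R a Q}.
Arguments term_le_sum {R m f}.
Arguments abs_le_sq {R}.
Arguments sqrt_le {R}.

Definition Emax (R : realType) n d (X : 'M[R]_(n, d)) (y : 'cV[R]_n) (Cb : 'I_d -> R) : R :=
  \sum_(k < n) (\sum_(i < d) `|X k i| * Cb i + `|y k 0|) ^+ 2.
Arguments Emax {R n d}.
Definition Qc (R : realType) n d (X : 'M[R]_(n, d)) (y : 'cV[R]_n) (Cb : 'I_d -> R) : R :=
  \sum_(k < n) `|y k 0| * (1 + Emax X y Cb + `|y k 0|).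
Arguments Qc {R n d}.
Definition B1 (R : realType) n d (X : 'M[R]_(n, d)) (y : 'cV[R]_n) (Cb : 'I_d -> R) : R :=
  \sum_(i < d) Qc X y Cb / (X^T *m y) i 0.
Arguments B1 {R n d}.
Definition Bfin (R : realType) n d (X : 'M[R]_(n, d)) (y : 'cV[R]_n) (Cb : 'I_d -> R) : R :=
  1 + \sum_(i < d) B1 X y Cb ^+ 2.
Arguments Bfin {R n d}.

Section Main.
Variable R : realType.
Variables (n d : nat) (X : 'M[R]_(n, d)) (y : 'cV[R]_n).
Variables (th : R -> 'I_d -> R) (x0 Cb : 'I_d -> R).
Hypothesis Hr : forall i, 0 < (X^T *m y) i 0.
Hypothesis Hx0 : forall i, 0 < x0 i.
Hypothesis HCb : forall i, x0 i <= Cb i.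
Hypothesis Hsol : lv_solution (X^T *m X) (X^T *m y) th x0.

Definition gg (t : R) (i : 'I_d) := (X^T *m y) i 0 - \sum_(j < d) (X^T *m X) i j * th t j.
Definition FF (t : R) (i : 'I_d) := lv_field (X^T *m X) (X^T *m y) (th t) i.
Definition uu (t : R) (k : 'I_n) := \sum_(i < d) X k i * th t i.
Definition EE (t : R) := \sum_(k < n) (uu t k - y k 0) ^+ 2.
Definition E0 := \sum_(k < n) (\sum_(i < d) X k i * x0 i - y k 0) ^+ 2.
Definition dE (t : R) := \sum_(k < n) 2 * (uu t k - y k 0) * \sum_(i < d) X k i * FF t i.

Lemma Mij i j : (X^T *m X) i j = \sum_(k < n) X k i * X k j.
Proof. by rewrite !mxE; apply: eq_bigr => k _; rewrite mxE. Qed.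
Lemma ri i : (X^T *m y) i 0 = \sum_(k < n) X k i * y k 0.
Proof. by rewrite !mxE; apply: eq_bigr => k _; rewrite mxE. Qed.

Lemma Hder (i : 'I_d) (t : R) : 0 < t -> is_derive t (1:R) (fun s => th s i) (FF t i).
Proof. by move=> t0; have [_ [_ D]] := Hsol i; exact: D. Qed.

Lemma Hcont (i : 'I_d) (t : R) : 0 < t -> (fun s => th s i) @ t --> th t i.
Proof.
move=> t0; have D := Hder i t t0.
apply: differentiable_continuous; rewrite -derivable1_diffP; exact: ex_derive.
Qed.

Lemma Hth0 : th 0 = x0.
Proof. by apply/funext => i; have [] := Hsol i. Qed.

Lemma Hlim (i : 'I_d) : (fun s => th s i) @ 0^'+ --> x0 i.
Proof. by have [_ []] := Hsol i. Qed.

Lemma E_deriv (t : R) : 0 < t -> is_derive t (1:R) EE (dE t).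
Proof.
move=> t0; rewrite /EE /dE; apply: dsum => k.
apply: dsq.
have Hu : is_derive t (1:R) (fun s => uu s k) (\sum_(i < d) X k i * FF t i).
  rewrite /uu; apply: dsum => i; apply: dcmul; exact: Hder.
by have := dB Hu (dcst (y k 0) t); rewrite subr0.
Qed.

Lemma dE_eq (t : R) : dE t = - 2 * \sum_(i < d) th t i * gg t i ^+ 2.
Proof.
have key i : \sum_(k < n) X k i * (uu t k - y k 0) = - gg t i.
  rewrite /gg opprB ri.
  under eq_bigr do rewrite mulrBr.
  rewrite sumrB; congr (_ - _).
  rewrite /uu; under eq_bigr do rewrite mulr_sumr.
  rewrite exchange_big /=; apply: eq_bigr => j _.
  by rewrite Mij mulr_suml; apply: eq_bigr => k _; rewrite mulrA.
rewrite /dE.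
under eq_bigr do rewrite mulr_sumr.
rewrite exchange_big /= mulr_sumr; apply: eq_bigr => i _.
transitivity (2 * FF t i * \sum_(k < n) X k i * (uu t k - y k 0)).
  by rewrite mulr_sumr; apply: eq_bigr => k _; ring.
rewrite key /FF /lv_field -/(gg t i); ring.
Qed.

Lemma dE_le0 (t : R) : (forall i, 0 <= th t i) -> dE t <= 0.
Proof.
move=> H; rewrite dE_eq mulNr oppr_le0; apply: mulr_ge0 => //.
apply: sumr_ge0 => i _; apply: mulr_ge0 => //; exact: sqr_ge0.
Qed.

Lemma Lyap_seg (s t : R) : 0 < s -> s <= t -> (forall c, s < c < t -> forall i, 0 <= th c i) -> EE t <= EE s.
Proof.
move=> s0; rewrite le_eqVlt => /predU1P[-> //|st] H.
rewrite -subr_le0.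
have [c cst ->] : exists2 c, c \in `]s, t[ & EE t - EE s = dE c * (t - s).
  apply: MVT => //.
    move=> c; rewrite in_itv /= => /andP[sc _]; apply: E_deriv; exact: lt_trans sc.
  apply: derivable_within_continuous => c; rewrite in_itv /= => /andP[sc _].
  have D := @E_deriv c (lt_le_trans s0 sc); exact: ex_derive.
rewrite mulr_le0_ge0 ?subr_ge0 ?(ltW st) //.
apply: dE_le0; apply: H; by rewrite in_itv /= in cst.
Qed.

Lemma Ecvg : EE s @[s --> 0^'+] --> E0.
Proof.
rewrite /EE /E0; apply: sumcvg => k.
under eq_cvg do rewrite expr2.
rewrite expr2.
have Hu : uu s k - y k 0 @[s --> 0^'+] --> \sum_(i < d) X k i * x0 i - y k 0.
  apply: cvgB; last exact: cvg_cst.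
  rewrite /uu; apply: sumcvg => i; apply: cvgMl_tmp; exact: Hlim.
exact: cvgM.
Qed.

Lemma Lyap (t : R) : 0 <= t -> (forall c, 0 < c < t -> forall i, 0 <= th c i) -> EE t <= E0.
Proof.
rewrite le_eqVlt => /predU1P[<- _|t0 H].
  by rewrite /EE /uu Hth0 /E0.
rewrite leNgt; apply/negP => Et.
have : \forall s \near (0:R)^'+, False.
  near=> s.
  have h1 : EE s < EE t by near: s; exact: (cvgr_lt _ Ecvg).
  have h2 : 0 < s by near: s; exact: nbhs_right_gt.
  have h3 : s < t by near: s; exact: nbhs_right_lt.
  have hH : forall c, s < c < t -> forall i, 0 <= th c i.
    by move=> c /andP[a b]; apply: H; rewrite b (lt_trans h2 a).
  by have := @Lyap_seg s t h2 (ltW h3) hH; rewrite leNgt h1.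
by case/filter_ex.
Unshelve. all: by end_near. Qed.


Lemma E0_le : E0 <= Emax X y Cb.
Proof.
rewrite /E0 /Emax; apply: ler_sum => k _.
set a := (\sum_(i < d) X k i * x0 i - y k 0).
set c := (\sum_(i < d) `|X k i| * Cb i + `|y k 0|).
have h : `|a| <= c.
  apply: le_trans (ler_normB _ _) _; rewrite lerD2r.
  apply: le_trans (ler_norm_sum _ _ _) _; apply: ler_sum => i _.
  rewrite normrM; apply: ler_wpM2l => //.
  by rewrite ger0_norm ?HCb // ltW.
rewrite -[a ^+ 2]real_normK ?num_real //.
have ha := normr_ge0 a; move: h ha; set z := `|a|; move=> h ha.
have c0 : 0 <= c by apply: le_trans h.
by apply: lerXn2r; rewrite ?nnegrE.
Qed.

Lemma bound (t : R) : (forall i, 0 <= th t i) -> EE t <= Emax X y Cb ->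
  forall i, th t i <= B1 X y Cb.
Proof.
move=> Hp HE i.
have Hsum : \sum_(j < d) (X^T *m y) j 0 * th t j <= Qc X y Cb.
  have -> : \sum_(j < d) (X^T *m y) j 0 * th t j = \sum_(k < n) y k 0 * uu t k.
    under eq_bigr do rewrite ri mulr_suml.
    rewrite exchange_big /=; apply: eq_bigr => k _.
    by rewrite /uu mulr_sumr; apply: eq_bigr => j _; ring.
  rewrite /Qc; apply: ler_sum => k _.
  have hk : (uu t k - y k 0) ^+ 2 <= Emax X y Cb.
    apply: le_trans HE; rewrite /EE.
    by apply: (term_le_sum (f := fun k => (uu t k - y k 0) ^+ 2)) => j; exact: sqr_ge0.
  have hu : `|uu t k| <= 1 + Emax X y Cb + `|y k 0|.
    have -> : uu t k = (uu t k - y k 0) + y k 0 by rewrite subrK.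
    apply: le_trans (ler_normD _ _) _; rewrite lerD2r.
    apply: le_trans (abs_le_sq _) _; by rewrite lerD2l.
  apply: le_trans (ler_norm _) _; rewrite normrM; apply: ler_wpM2l => //.
have ri0 : (X^T *m y) i 0 * th t i <= Qc X y Cb.
  apply: le_trans Hsum.
  apply: (term_le_sum (f := fun j => (X^T *m y) j 0 * th t j)) => j.
  by apply: mulr_ge0 => //; apply: ltW.
have Q0 : 0 <= Qc X y Cb by apply: le_trans ri0; apply: mulr_ge0 => //; apply: ltW.
have : th t i <= Qc X y Cb / (X^T *m y) i 0 by rewrite ler_pdivlMr // mulrC.
move/le_trans; apply.
rewrite /B1; apply: (term_le_sum (f := fun j => Qc X y Cb / (X^T *m y) j 0)) => j.
by apply: divr_ge0 => //; apply: ltW.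
Qed.

Lemma bound_at (t : R) : 0 <= t -> (forall c, 0 <= c <= t -> forall i, 0 < th c i) ->
  forall i, th t i <= B1 X y Cb.
Proof.
move=> t0 H; apply: bound.
  by move=> i; apply: ltW; apply: H; rewrite lexx t0.
apply: le_trans E0_le; apply: Lyap => // c /andP[a b] i.
by apply: ltW; apply: H; rewrite ltW ?(ltW b).
Qed.

Lemma pos_step (t1 : R) : 0 < t1 -> (forall c, 0 < c < t1 -> forall j, 0 < th c j) ->
  forall j, 0 < th t1 j.
Proof.
move=> t1p Hg j.
have Hb : forall c, 0 < c < t1 -> forall k, th c k <= B1 X y Cb.
  move=> c /andP[c0 ct]; apply: bound_at; first exact: ltW.
  move=> c' /andP[]; rewrite le_eqVlt => /predU1P[<- _|c'0 c'c] i.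
    by rewrite Hth0.
  by apply: Hg; rewrite c'0 (le_lt_trans c'c ct).
set K := \sum_(k < d) `|(X^T *m X) j k| * B1 X y Cb.
set s0 := t1 / 2.
have s0p : 0 < s0 by rewrite /s0 divr_gt0.
have s0t : s0 < t1 by rewrite /s0 ltr_pdivrMr // mulr_natr mulr2n ltrDr.
have [c cin eq] : exists2 c, c \in `]s0, t1[ &
  th t1 j * expR (K * t1) - th s0 j * expR (K * s0) =
  (th c j * (K * expR (K * c)) + expR (K * c) * FF c j) * (t1 - s0).
  apply: (@MVT R (fun s => th s j * expR (K * s))
    (fun c => th c j * (K * expR (K * c)) + expR (K * c) * FF c j)) => //.
    move=> c; rewrite in_itv /= => /andP[a _].
    exact: (dM (Hder j c (lt_trans s0p a)) (dexp K c)).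
  apply: derivable_within_continuous => c; rewrite in_itv /= => /andP[a _].
  have D := (dM (Hder j c (lt_le_trans s0p a)) (dexp K c)); exact: ex_derive.
move: cin; rewrite in_itv /= => /andP[c1 c2].
have cp : 0 < c by apply: lt_trans c1.
have Hc : 0 < c < t1 by rewrite cp c2.
have dpos : 0 <= th c j * (K * expR (K * c)) + expR (K * c) * FF c j.
  rewrite /FF /lv_field -/(gg c j).
  have gK : - K <= gg c j.
    rewrite /gg.
    have : \sum_(k < d) (X^T *m X) j k * th c k <= K.
      apply: ler_sum => k _; apply: le_trans (ler_norm _) _.
      rewrite normrM (ger0_norm (ltW (Hg c Hc k))).
      by apply: ler_wpM2l => //; apply: Hb.
    have := Hr j; lra.
  have : 0 <= th c j * expR (K * c) * (K + gg c j).
    apply: mulr_ge0; last by lra.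
    by apply: mulr_ge0; [apply: ltW; apply: Hg | apply: expR_ge0].
  move=> h; apply: le_trans h _; rewrite le_eqVlt; apply/orP; left; apply/eqP; ring.
have psi0 : 0 < th s0 j * expR (K * s0).
  by apply: mulr_gt0; [apply: Hg; rewrite s0p s0t | apply: expR_gt0].
have : 0 < th t1 j * expR (K * t1).
  have st : 0 <= t1 - s0 by rewrite subr_ge0 ltW.
  have := mulr_ge0 dpos st.
  rewrite -eq; lra.
by rewrite pmulr_lgt0 // expR_gt0.
Qed.



Lemma pos_all (t : R) : 0 <= t -> forall i, 0 < th t i.
Proof.
move=> t0; have [//|Hn] := pselect (forall i, 0 < th t i).
exfalso.
set S := [set s : R | 0 <= s /\ ~ (forall i, 0 < th s i)].
have S_ne : S !=set0 by exists t.
have S_lb : lbound S 0 by move=> s [].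
have S_hlb : has_lbound S by exists 0.
set t1 := inf S.
have low : forall s, S s -> t1 <= s by move=> s Ss; exact: ge_inf.
have t10 : 0 <= t1 by apply: lb_le_inf.
have good : forall c, 0 <= c < t1 -> forall i, 0 < th c i.
  move=> c /andP[c0 ct]; have [//|Hc] := pselect (forall i, 0 < th c i).
  by have := low c (conj c0 Hc); rewrite leNgt ct.
have P0 : forall i, 0 < th 0 i by move=> i; rewrite Hth0.
have t1p : 0 < t1.
  have N : \forall s \near (0:R)^'+, forall i, 0 < th s i.
    apply: filter_forall => i; exact: (cvgr_gt _ (Hlim i) _ (Hx0 i)).
  have [e e0 He] := near_right_ex N.
  rewrite lt_def t10 andbT; apply/eqP => t1E.
  have [s Ss se] : exists2 s, S s & s < e by apply: inf_lt => //; rewrite -/t1 t1E.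
  case: Ss => s0 Ps; move: s0; rewrite le_eqVlt => /predU1P[s0E|s0].
    by apply: Ps; rewrite -s0E.
  by apply: Ps; apply: He; rewrite s0 add0r se.
have Pt1 : forall i, 0 < th t1 i.
  apply: (@pos_step t1 t1p) => c /andP[c0 ct]; apply: good; by rewrite ct ltW.
have N : \forall s \near t1, forall i, 0 < th s i.
  apply: (@filter_forall R _ (fun i s => 0 < th s i) (nbhs t1)) => i; exact: (cvgr_gt _ (Hcont i t1 t1p) _ (Pt1 i)).
have [e e0 He] := near_ex N.
have [s Ss se] : exists2 s, S s & s < t1 + e by apply: inf_lt => //; rewrite ltrDl.
have ts := low s Ss.
case: Ss => _ Ps; apply: Ps; apply: He.
by rewrite ger0_norm ?subr_ge0 // ltrBlDl.
Qed.

Lemma final_bound (t : R) : 0 <= t -> eucl_norm (th t) <= Bfin X y Cb.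
Proof.
move=> t0; rewrite /eucl_norm.
apply: le_trans (sqrt_le _ _) _.
  by apply: sumr_ge0 => i _; exact: sqr_ge0.
rewrite /Bfin lerD2l; apply: ler_sum => i _.
have h1 := @pos_all t t0 i.
have h2 : th t i <= B1 X y Cb.
  apply: (@bound_at t t0) => c /andP[c0 _]; exact: pos_all.
nra.
Qed.

End Main.

Theorem lemma2 (R : realType) (n d : nat) (X : 'M[R]_(n, d)) (y : 'cV[R]_n)
  (C k : 'I_d -> R) (theta : R -> R -> 'I_d -> R) :
  (forall i : 'I_d, 0 < (X^T *m y) i 0) ->
  (forall i j : 'I_d, i != j -> (X^T *m X) i j <= 0) ->
  (forall i : 'I_d, 0 < C i) ->
  (forall i : 'I_d, 0 < k i) ->
  (forall eps : R, 0 < eps <= 1 ->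
     lv_solution (X^T *m X) (X^T *m y) (theta eps) (fun i => C i * eps `^ k i)) ->
  exists B : R, 0 < B /\
    forall eps t : R, 0 < eps <= 1 -> 0 <= t -> eucl_norm (theta eps t) <= B.
Proof.
move=> Hr _ HC Hk Hsol.
exists (Bfin X y C); split.
  rewrite /Bfin; apply: (lt_le_trans ltr01); rewrite lerDl.
  by apply: sumr_ge0 => i _; exact: sqr_ge0.
move=> eps t he t0.
have /andP[e0 e1] := he.
apply: (@final_bound R n d X y (theta eps) (fun i => C i * eps `^ k i) C Hr) => //.
- by move=> i; apply: mulr_gt0 => //; exact: powR_gt0.
- move=> i; apply: ler_piMr; first exact: ltW.
  rewrite -[X in _ <= X](powRr0 eps); apply: ger_powR => //; exact: ltW.
- exact: Hsol.
Qed.
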